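(* Let $G=(V,E)$ be a finite undirected graph with $n=|V|$ nodes, adjacency matrix $A$, diagonal degree matrix $D$, normalized adjacency $\tilde A=D^{-1/2}(A+I)D^{-1/2}$ and normalized Laplacian $L=I-\tilde A$, with orthonormal eigendecomposition $L=\Phi\Lambda\Phi^\top$, eigenvalues $\lambda_1\le\lambda_2\le\dots\le\lambda_n$ and corresponding orthonormal eigenvectors $\phi_1,\dots,\phi_n$. Fix $T\ge 1$, $1\le K\le n-1$, a node feature matrix $X\in\mathbb R^{n\times d}$, and let $P=[\phi_2,\dots,\phi_{K+1}]\in\mathbb R^{n\times K}$. Let \[ \mathcal H^{(T)}_{\mathrm{LapPE}}=\{\tilde A^{T}[X\,|\,P]\,w:\ w\in\mathbb R^{d+K}\} \] be the class of outputs of a $T$-layer linearized GCN whose input features are augmented with $P$. If $(1-\lambda_k)^T\neq 0$ for all $k=2,\dots,K+1$, then for every label signal $y\in\mathbb R^n$, \[ \min_{\hat y\in\mathcal H^{(T)}_{\mathrm{LapPE}}}\|y-\hat y\|_2\;\le\;\bigl\|y-\Pi_{\mathrm{span}(\phi_2,\dots,\phi_{K+1})}\,y\bigr\|_2, \] where $\Pi_S$ denotes orthogonal projection onto the subspace $S$.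
   Context: A linearized $T$-layer GCN computes $\tilde A^T H^{(0)}W^{(1)}\cdots W^{(T)}$; with scalar output and sufficiently wide layers the product of weight matrices is an arbitrary vector $w$, giving the hypothesis class above. *)

(* Defs.v *)
From HB Require Import structures.
From mathcomp Require Import all_boot all_order all_algebra.
Set Implicit Arguments. Unset Strict Implicit. Unset Printing Implicit Defensive.
Import Order.TTheory GRing.Theory Num.Theory.
Local Open Scope ring_scope.

Section Defs.
Variable R : rcfType.

Definition adjmx n (e : rel 'I_n) : 'M[R]_n := \matrix_(i, j) (e i j)%:R.

Definition degree n (A : 'M[R]_n) (i : 'I_n) : R := \sum_j A i j.

(* D^{-1/2}, with the convention 0^{-1/2} = 0 for isolated nodes *)
Definition Dinvsqrt n (A : 'M[R]_n) : 'M[R]_n :=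
  diag_mx (\row_i (Num.sqrt (degree A i))^-1).

Definition normadj n (A : 'M[R]_n) : 'M[R]_n :=
  Dinvsqrt A *m (A + 1%:M) *m Dinvsqrt A.

Definition normlap n (A : 'M[R]_n) : 'M[R]_n := 1%:M - normadj A.

Definition mxpow n (M : 'M[R]_n) (T : nat) : 'M[R]_n := iter T (mulmx M) 1%:M.

(* P = [phi_2, ..., phi_{K+1}] : columns 1..K (0-based) of Phi *)
Definition lapPE n K (Phi : 'M[R]_n) : 'M[R]_(n, K) :=
  \matrix_(i, j) oapp (fun k : 'I_n => Phi i k) 0 (insub j.+1).

Definition norm2 n (v : 'cV[R]_n) : R := Num.sqrt (\sum_i v i 0 ^+ 2).

Definition in_colspan n m (M : 'M[R]_(n, m)) (v : 'cV[R]_n) : Prop :=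
  exists c : 'cV[R]_m, v = M *m c.

Definition is_orth_proj n m (M : 'M[R]_(n, m)) (y p : 'cV[R]_n) : Prop :=
  in_colspan M p /\ forall s, in_colspan M s -> (s^T *m (y - p)) = 0.

End Defs.

(* Main.v *)
Require Import Defs.
From HB Require Import structures.
From mathcomp Require Import all_boot all_order all_algebra.
Import Order.TTheory GRing.Theory Num.Theory.
Local Open Scope ring_scope.

Theorem proposition3p3 (R : rcfType) (n : nat) (e : rel 'I_n)
  (e_sym : symmetric e) (e_irr : irreflexive e)
  (Phi : 'M[R]_n) (lam : 'I_n -> R)
  (Phi_orth : Phi^T *m Phi = 1%:M)
  (eig : normlap (adjmx R e) = Phi *m diag_mx (\row_i lam i) *m Phi^T)
  (lam_sorted : forall i j : 'I_n, (i <= j)%N -> lam i <= lam j)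
  (T K d : nat) (hT : (1 <= T)%N) (hK1 : (1 <= K)%N) (hKn : (K <= n - 1)%N)
  (X : 'M[R]_(n, d))
  (hnz : forall k : 'I_n, (1 <= k <= K)%N -> (1 - lam k) ^+ T != 0)
  (y : 'cV[R]_n) (p : 'cV[R]_n)
  (hp : is_orth_proj (lapPE K Phi) y p) :
  exists w : 'cV[R]_(d + K),
    norm2 (y - mxpow (normadj (adjmx R e)) T *m row_mx X (lapPE K Phi) *m w)
      <= norm2 (y - p).
Proof.
set A := normadj (adjmx R e).
have hA : A = 1%:M - normlap (adjmx R e) by rewrite /normlap opprB addrC subrK.
have APhi : A *m Phi = Phi *m diag_mx (\row_i (1 - lam i)).
  rewrite hA eig mulmxBl mul1mx -!mulmxA Phi_orth mulmx1.
  rewrite !mul_mx_diag; apply/matrixP => i j; rewrite !mxE mulrBr mulr1.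
  by [].
have ATPhi : forall t, mxpow A t *m Phi = Phi *m diag_mx (\row_i ((1 - lam i) ^+ t)).
  elim => [|t IH].
    rewrite /mxpow /= mul1mx.
    have -> : diag_mx (\row_i ((1 - lam i) ^+ 0)) = 1%:M :> 'M[R]_n.
      by apply/matrixP => i j; rewrite !mxE expr0.
    by rewrite mulmx1.
  rewrite /mxpow iterS -/(mxpow A t) -mulmxA IH mulmxA APhi -mulmxA mulmx_diag.
  congr (_ *m diag_mx _); apply/matrixP => i j; rewrite !mxE exprS //.
set S : 'M[R]_(n, K) := \matrix_(k, j) ((k : nat) == j.+1)%:R.
have PS : lapPE K Phi = Phi *m S.
  apply/matrixP => i j; rewrite !mxE.
  case: insubP => [k _ kE|hk] /=.
    rewrite (bigD1 k) //= !mxE -kE eqxx mulr1 big1 ?addr0 // => k' hk'.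
    by rewrite !mxE -kE; case: eqP => [/val_inj /eqP|]; rewrite ?(negbTE hk') ?mulr0.
  rewrite big1 // => k _; rewrite !mxE; case: eqP => [E|]; last by rewrite mulr0.
  by move: hk; rewrite -E ltn_ord.
pose mu := \row_(j < K) oapp (fun k : 'I_n => (1 - lam k) ^+ T) 1 (insub j.+1).
have mu_nz : forall j, mu 0 j != 0.
  move=> j; rewrite !mxE; case: insubP => [k _ kE|] //= ; last by rewrite oner_neq0.
  by apply: hnz; rewrite kE /= ltn_ord.
have SD : diag_mx (\row_i ((1 - lam i) ^+ T)) *m S = S *m diag_mx mu.
  rewrite mul_diag_mx mul_mx_diag; apply/matrixP => k j; rewrite !mxE.
  case: eqP => [E|]; last by rewrite !(mulr0, mul0r).
  rewrite mulr1 mul1r; case: insubP => [k' _ kE|] /=; last by move=> /negP []; have := ltn_ord k; rewrite E.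
  by congr (_ ^+ _); congr (1 - lam _); apply: ord_inj; rewrite E -kE.
case: hp => [[c pc] _].
pose nu := \row_(j < K) (mu 0 j)^-1.
exists (col_mx 0 (diag_mx nu *m c)).
suff -> : mxpow A T *m row_mx X (lapPE K Phi) *m col_mx 0 (diag_mx nu *m c) = p by [].
rewrite -mulmxA mul_row_col mulmx0 add0r PS !mulmxA ATPhi -(mulmxA Phi) SD.
rewrite !mulmxA -(mulmxA _ (diag_mx mu)) mulmx_diag.
have -> : \row_j (mu 0 j * nu 0 j) = const_mx 1.
  by apply/matrixP => i j; have := mu_nz j; rewrite !mxE => h; rewrite divff.
by rewrite diag_const_mx mulmx1 -PS pc.
Qed.
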